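(* Let $\Lambda=\langle a_1\rangle\perp\langle a_2\rangle$ be a skew-hermitian lattice such that $N(a_2)\in N(a_1)k^{*2}$ and the extension $k(a_1)/k$ is ramified. Then there exists a skew-hermitian lattice $L=\langle q\rangle\perp\langle\epsilon q\rangle$, with $q\in D^*$ and $\epsilon\in k^*$, such that $H(\Lambda)=H(L)$. Moreover, $q$ can be taken to be $q'$ for any pure quaternion $q'\in D^*$ with $N(q')\in N(a_1)k^{*2}$.
   Context: $k$ is a dyadic local field of characteristic $0$, $D$ the quaternion division algebra over $k$ with involution $q\mapsto\bar q$, reduced norm $N$, maximal order $\mathcal{O}_D$. A skew-hermitian space is a free $D$-module $V$ with nondegenerate $h$, $D$-linear in the first variable, $h(x,y)=-\overline{h(y,x)}$. For a pure quaternion $a$, $\langle a\rangle$ denotes a rank-one lattice $\mathcal{O}_Dx$ with $h(x,x)=a$, and $\perp$ denotes orthogonal sum. $H(\Lambda)\supseteq k^{*2}$ is defined by $H(\Lambda)/k^{*2}=\theta(\mathcal{U}^+_k(\Lambda))$, where $\mathcal{U}^+_k(\Lambda)$ is the group of isometries of $h$ preserving $\Lambda$ and $\theta$ the spinor norm ($\theta((s;\sigma))=N(\sigma)k^{*2}$ for simple rotations $(s;\sigma)(x)=x-h(x,s)\sigma^{-1}s$, $\sigma-\bar\sigma=h(s,s)$). *)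

(* Defs.v *)
From HB Require Import structures.
From mathcomp Require Import all_boot all_order all_algebra.
Set Implicit Arguments. Unset Strict Implicit. Unset Printing Implicit Defensive.
Import Order.TTheory GRing.Theory Num.Theory.
Local Open Scope ring_scope.

Section LocalField.
Variable k : fieldType.
Variable v : k -> int.   (* normalized discrete valuation; v 0 is irrelevant *)

Definition integral (x : k) : Prop := x = 0 \/ 0 <= v x.

Definition v_close (n : int) (x y : k) : Prop := x - y = 0 \/ n <= v (x - y).

Definition v_cauchy (u : nat -> k) : Prop :=
  forall n : int, exists N : nat, forall m p : nat,
    (N <= m)%N -> (N <= p)%N -> v_close n (u m) (u p).

Definition v_converges (u : nat -> k) (l : k) : Prop :=
  forall n : int, exists N : nat, forall m : nat, (N <= m)%N -> v_close n (u m) l.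

Definition dyadic_local_field : Prop :=
  (forall x y, x != 0 -> y != 0 -> v (x * y) = v x + v y) /\
      (forall x y, x != 0 -> y != 0 -> x + y != 0 ->
                   Num.min (v x) (v y) <= v (x + y)) /\
      (exists pi : k, pi != 0 /\ v pi = 1) /\
      (* finite residue field: finitely many residue classes of integers *)
      (exists r : seq k, (forall y, y \in r -> integral y) /\
          forall x, integral x -> exists2 y, y \in r & v_close 1 x y) /\
      (forall u, v_cauchy u -> exists l, v_converges u l) /\
      [pchar k] =i pred0 /\ 0 < v 2%:R.
End LocalField.

Record quat (k : Type) := Quat { q0 : k; q1 : k; q2 : k; q3 : k }.

Section Quat.
Variable k : fieldType.
Variables alpha beta : k.   (* i^2 = alpha, j^2 = beta, ij = -ji *)

Definition qk (c : k) : quat k := Quat c 0 0 0.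
Definition qzero : quat k := qk 0.
Definition qone : quat k := qk 1.
Definition qadd (a b : quat k) : quat k :=
  Quat (q0 a + q0 b) (q1 a + q1 b) (q2 a + q2 b) (q3 a + q3 b).
Definition qopp (a : quat k) : quat k := Quat (- q0 a) (- q1 a) (- q2 a) (- q3 a).
Definition qsub a b := qadd a (qopp b).
Definition qscal (c : k) (a : quat k) : quat k :=
  Quat (c * q0 a) (c * q1 a) (c * q2 a) (c * q3 a).
Definition qmul (a b : quat k) : quat k :=
  Quat (q0 a * q0 b + alpha * q1 a * q1 b + beta * q2 a * q2 b
          - alpha * beta * q3 a * q3 b)
       (q0 a * q1 b + q1 a * q0 b - beta * q2 a * q3 b + beta * q3 a * q2 b)
       (q0 a * q2 b + q2 a * q0 b + alpha * q1 a * q3 b - alpha * q3 a * q1 b)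
       (q0 a * q3 b + q3 a * q0 b + q1 a * q2 b - q2 a * q1 b).
Definition qconj (a : quat k) : quat k := Quat (q0 a) (- q1 a) (- q2 a) (- q3 a).
Definition qnorm (a : quat k) : k :=
  q0 a ^+ 2 - alpha * q1 a ^+ 2 - beta * q2 a ^+ 2 + alpha * beta * q3 a ^+ 2.
Definition qinv (a : quat k) : quat k := qscal (qnorm a)^-1 (qconj a).

Definition pure (a : quat k) : Prop := q0 a = 0.

Definition quat_division : Prop :=
  forall x, x <> qzero -> exists y, qmul x y = qone.

Variable v : k -> int.

Definition qcomb (cs : seq k) (gs : seq (quat k)) : quat k :=
  foldr (fun p acc => qadd (qscal p.1 p.2) acc) qzero (zip cs gs).

Definition is_order (O : quat k -> Prop) : Prop :=
  O qone /\
      (forall x y, O x -> O y -> O (qadd x y)) /\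
      (forall x, O x -> O (qopp x)) /\
      (forall x y, O x -> O y -> O (qmul x y)) /\
      (forall c x, integral v c -> O x -> O (qscal c x)) /\
      (* finitely generated over the valuation ring *)
      (exists gs : seq (quat k), (forall i, (i < size gs)%N -> O (nth qzero gs i)) /\
         forall x, O x -> exists cs : seq k, size cs = size gs /\
             (forall i, (i < size cs)%N -> integral v (nth 0 cs i)) /\ x = qcomb cs gs)
    /\ (* spans D over k *)
      (forall x, exists c : k, c != 0 /\ O (qscal c x)).

Definition maximal_order (O : quat k -> Prop) : Prop :=
  is_order O /\ forall O', is_order O' -> (forall x, O x -> O' x) ->
                           forall x, O' x -> O x.

(* k(a)/k ramified: the normalized extension w of v to K = k(a) = {x + y a},
   w(z) = v(N_{K/k} z)/2, takes a non-integral value (ramification index 2) *)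
Definition ramified (a : quat k) : Prop :=
  exists x y : k, (x != 0 \/ y != 0) /\
    ~ (exists m : int, v (qnorm (qadd (qk x) (qscal y a))) = 2 * m).

(* ---- the skew-hermitian space D^2 with h = diag(b1,b2) and the lattice
        Lambda = O_D e1 + O_D e2 = <b1> _|_ <b2> ---- *)
Definition vec := (quat k * quat k)%type.

Definition hform (b1 b2 : quat k) (x y : vec) : quat k :=
  qadd (qmul x.1 (qmul b1 (qconj y.1))) (qmul x.2 (qmul b2 (qconj y.2))).

Definition vsub (x y : vec) : vec := (qsub x.1 y.1, qsub x.2 y.2).
Definition vlscal (d : quat k) (x : vec) : vec := (qmul d x.1, qmul d x.2).

Definition simple_rot (b1 b2 : quat k) (s : vec) (sigma : quat k) (x : vec) : vec :=
  vsub x (vlscal (qmul (hform b1 b2 x s) (qinv sigma)) s).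

Definition valid_rot (b1 b2 : quat k) (r : vec * quat k) : Prop :=
  r.2 <> qzero /\ qsub r.2 (qconj r.2) = hform b1 b2 r.1 r.1.

Fixpoint all_valid (b1 b2 : quat k) (rs : seq (vec * quat k)) : Prop :=
  if rs is r :: rs' then valid_rot b1 b2 r /\ all_valid b1 b2 rs' else True.

Definition rot_prod (b1 b2 : quat k) (rs : seq (vec * quat k)) : vec -> vec :=
  foldr (fun r f => simple_rot b1 b2 r.1 r.2 \o f) id rs.

(* theta((s1;sigma1)...(sr;sigmar)) = N(sigma1)...N(sigmar) k*^2 *)
Definition norm_prod (rs : seq (vec * quat k)) : k :=
  foldr (fun r acc => qnorm r.2 * acc) 1 rs.

Variable O : quat k -> Prop.

Definition in_lattice (x : vec) : Prop := O x.1 /\ O x.2.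

Definition preserves_lattice (u : vec -> vec) : Prop :=
  (forall x, in_lattice x -> in_lattice (u x)) /\
  (forall y, in_lattice y -> exists x, in_lattice x /\ u x = y).

(* H(<b1> _|_ <b2>) : c \in H iff c \in k^* and c k*^2 = theta(u) for some
   u in U^+(Lambda), written as a product of simple rotations *)
Definition Hgroup (b1 b2 : quat k) (c : k) : Prop :=
  c != 0 /\ exists rs : seq (vec * quat k),
    [/\ all_valid b1 b2 rs, preserves_lattice (rot_prod b1 b2 rs) &
        exists t : k, t != 0 /\ c = norm_prod rs * t ^+ 2].

End Quat.

(* Main.v *)
Require Import Defs.
From HB Require Import structures.
From mathcomp Require Import all_boot all_order all_algebra.
From mathcomp Require Import ring lra zify.
From Stdlib Require Import Classical.
Import Order.TTheory GRing.Theory Num.Theory.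
Local Open Scope ring_scope.
Set Implicit Arguments. Unset Strict Implicit. Unset Printing Implicit Defensive.

Ltac qsolve := repeat match goal with x : quat _ |- _ => destruct x end;
  rewrite /qzero /qone /qinv /qsub /qmul /qadd /qopp /qscal /qconj /qnorm /qk /=;
  f_equal; ring.

Section QA.
Variable k : fieldType.
Variables alpha beta : k.
Local Notation mul := (qmul alpha beta).
Local Notation nrm := (qnorm alpha beta).

Lemma qmulA x y z : mul x (mul y z) = mul (mul x y) z. Proof. qsolve. Qed.
Lemma qnormM x y : nrm (mul x y) = nrm x * nrm y. Proof. qsolve. Qed.
Lemma qconjM x y : qconj (mul x y) = mul (qconj y) (qconj x). Proof. qsolve. Qed.
Lemma qconjK (x : quat k) : qconj (qconj x) = x. Proof. qsolve. Qed.
Lemma qnorm_conj x : nrm (qconj x) = nrm x. Proof. qsolve. Qed.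
Lemma qmul_conj x : mul x (qconj x) = qk (nrm x). Proof. qsolve. Qed.
Lemma qmul_conjl x : mul (qconj x) x = qk (nrm x). Proof. qsolve. Qed.
Lemma qmul1 x : mul x (qone k) = x. Proof. qsolve. Qed.
Lemma qmul1l x : mul (qone k) x = x. Proof. qsolve. Qed.
Lemma qmul0 x : mul x (qzero k) = qzero k. Proof. qsolve. Qed.
Lemma qmul0l x : mul (qzero k) x = qzero k. Proof. qsolve. Qed.
Lemma qmulDl x y z : mul (qadd x y) z = qadd (mul x z) (mul y z). Proof. qsolve. Qed.
Lemma qmulDr x y z : mul z (qadd x y) = qadd (mul z x) (mul z y). Proof. qsolve. Qed.
Lemma qmulNl x y : mul (qopp x) y = qopp (mul x y). Proof. qsolve. Qed.
Lemma qmulNr x y : mul x (qopp y) = qopp (mul x y). Proof. qsolve. Qed.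
Lemma qmulZl c x y : mul (qscal c x) y = qscal c (mul x y). Proof. qsolve. Qed.
Lemma qmulZr c x y : mul x (qscal c y) = qscal c (mul x y). Proof. qsolve. Qed.
Lemma qmulkl c x : mul (qk c) x = qscal c x. Proof. qsolve. Qed.
Lemma qmulkr c x : mul x (qk c) = qscal c x. Proof. qsolve. Qed.
Lemma qscalA c d (x : quat k) : qscal c (qscal d x) = qscal (c * d) x. Proof. qsolve. Qed.
Lemma qscal1 (x : quat k) : qscal 1 x = x. Proof. qsolve. Qed.
Lemma qscalk c d : qscal c (qk d) = qk (c * d) :> quat k. Proof. qsolve. Qed.
Lemma qconjZ c (x : quat k) : qconj (qscal c x) = qscal c (qconj x). Proof. qsolve. Qed.
Lemma qnormZ c x : nrm (qscal c x) = c ^+ 2 * nrm x. Proof. qsolve. Qed.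
Lemma qnormk c : nrm (qk c) = c ^+ 2. Proof. qsolve. Qed.
Lemma qnorm1 : nrm (qone k) = 1. Proof. qsolve. Qed.
Lemma qnormN x : nrm (qopp x) = nrm x. Proof. qsolve. Qed.
Lemma qaddC (x y : quat k) : qadd x y = qadd y x. Proof. qsolve. Qed.
Lemma qaddA (x y z : quat k) : qadd x (qadd y z) = qadd (qadd x y) z. Proof. qsolve. Qed.
Lemma qadd0 (x : quat k) : qadd x (qzero k) = x. Proof. qsolve. Qed.
Lemma qadd0l (x : quat k) : qadd (qzero k) x = x. Proof. qsolve. Qed.
Lemma qaddN (x : quat k) : qadd x (qopp x) = qzero k. Proof. qsolve. Qed.
Lemma qsubK (x y : quat k) : qadd (qsub x y) y = x. Proof. qsolve. Qed.
Lemma qscal0 (x : quat k) : qscal 0 x = qzero k. Proof. qsolve. Qed.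

Lemma qnorm_eq0 x : nrm x = 0 -> quat_division alpha beta -> x = qzero k.
Proof.
move=> N0 div; case: (classic (x = qzero k)) => // /div [y xy].
have := congr1 nrm xy; rewrite qnormM qnorm1 N0 mul0r => /eqP; by rewrite eq_sym oner_eq0.
Qed.

Lemma qnorm_neq0 x : quat_division alpha beta -> x <> qzero k -> nrm x != 0.
Proof. by move=> div nx; apply/eqP => /qnorm_eq0 /(_ div). Qed.

Lemma qnorm_zero : nrm (qzero k) = 0. Proof. qsolve. Qed.

Lemma qinvr x : nrm x != 0 -> mul x (qinv alpha beta x) = qone k.
Proof. move=> nx; rewrite /qinv qmulZr qmul_conj qscalk mulVf //. Qed.
Lemma qinvl x : nrm x != 0 -> mul (qinv alpha beta x) x = qone k.
Proof. move=> nx; rewrite /qinv qmulZl qmul_conjl qscalk mulVf //. Qed.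
Lemma qnorm_inv x : nrm x != 0 -> nrm (qinv alpha beta x) = (nrm x)^-1.
Proof.
move=> nx; have := congr1 nrm (qinvr nx); rewrite qnormM qnorm1 => h.
by apply: (mulfI nx); rewrite h mulfV.
Qed.

Lemma pure_sq a : pure a -> mul a a = qk (- nrm a).
Proof. case: a => a0 a1 a2 a3; rewrite /pure /= => ->; qsolve. Qed.

(* Cayley-Hamilton factorisation *)
Lemma qfactor x r : r ^+ 2 - (2 * q0 x) * r + nrm x = 0 ->
  mul (qsub x (qk r)) (qsub x (qk (2 * q0 x - r))) = qzero k.
Proof.
case: x => x0 x1 x2 x3 /= E.
rewrite /qzero /qmul /qsub /qadd /qopp /qk /=; f_equal; try ring.
apply: (@eq_trans _ _ (- (r ^+ 2 - 2 * x0 * r + nrm (Quat x0 x1 x2 x3)))); last by rewrite E oppr0.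
rewrite /qnorm /=; ring.
Qed.

Lemma qnozd x y : quat_division alpha beta -> mul x y = qzero k ->
  x = qzero k \/ y = qzero k.
Proof.
move=> div xy; have := congr1 nrm xy; rewrite qnormM qnorm_zero => /eqP.
rewrite mulf_eq0 => /orP [] /eqP h; [left|right]; exact: qnorm_eq0.
Qed.

End QA.


Section Val.
Variable k : fieldType.
Variable v : k -> int.
Hypothesis vM : forall x y, x != 0 -> y != 0 -> v (x * y) = v x + v y.
Hypothesis vA : forall x y, x != 0 -> y != 0 -> x + y != 0 ->
                   Num.min (v x) (v y) <= v (x + y).

Ltac vlia := repeat (match goal with |- context [v ?x] => let z := fresh "z" in set z := v x in *; clearbody z end
  || match goal with H : context [v ?x] |- _ => let z := fresh "z" in set z := v x in *; clearbody z end); lia.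

Definition II (x : k) (m : int) : Prop := x = 0 \/ m <= v x.

Lemma v1 : v 1 = 0.
Proof. have := vM (oner_neq0 k) (oner_neq0 k); rewrite mulr1; move: (v 1) => z h; vlia. Qed.

Lemma vN x : v (- x) = v x.
Proof.
have h1 : v (-1) = 0.
  have n1 : (-1 : k) != 0 by rewrite oppr_eq0 oner_neq0.
  have := vM n1 n1; rewrite mulrNN mulr1 v1 => h; vlia.
case: (eqVneq x 0) => [->|nx]; first by rewrite oppr0.
have n1 : (-1 : k) != 0 by rewrite oppr_eq0 oner_neq0.
by rewrite -mulN1r vM // h1 add0r.
Qed.

Lemma vV x : x != 0 -> v (x^-1) = - v x.
Proof.
move=> nx; have := vM nx (invr_neq0 nx); rewrite mulfV // v1 => h; vlia.
Qed.

Lemma vX x n : x != 0 -> v (x ^+ n) = (n%:Z * v x)%R.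
Proof.
move=> nx; elim: n => [|n IH]; first by rewrite expr0 v1 mul0r.
rewrite exprS vM ?expf_neq0 // IH; vlia.
Qed.

Lemma vD x y : x != 0 -> y != 0 -> v (x / y) = v x - v y.
Proof. by move=> nx ny; rewrite vM ?invr_neq0 // vV. Qed.

Lemma II_weak x m n : (n <= m)%R -> II x m -> II x n.
Proof. by move=> nm [->|h]; [left|right; lia]. Qed.
Lemma II0 m : II 0 m. Proof. by left. Qed.
Lemma IIN x m : II x m -> II (- x) m.
Proof. by case=> [->|h]; [left; rewrite oppr0|right; rewrite vN]. Qed.
Lemma IIadd x y m : II x m -> II y m -> II (x + y) m.
Proof.
case=> [->|hx]; first by move=> h; rewrite add0r. case=> [->|hy]; first by rewrite addr0; right.
case: (eqVneq x 0) => [->|nx]; first by rewrite add0r; right.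
case: (eqVneq y 0) => [->|ny]; first by rewrite addr0; right.
case: (eqVneq (x + y) 0) => [->|nxy]; first by left.
right; apply: le_trans (vA nx ny nxy); by rewrite le_min hx hy.
Qed.
Lemma IIsub x y m : II x m -> II y m -> II (x - y) m.
Proof. by move=> hx hy; apply: IIadd => //; apply: IIN. Qed.
Lemma IImul x y m n : II x m -> II y n -> II (x * y) (m + n).
Proof.
case=> [->|hx]; first by rewrite mul0r; left. case=> [->|hy]; first by rewrite mulr0; left.
case: (eqVneq x 0) => [->|nx]; first by rewrite mul0r; left.
case: (eqVneq y 0) => [->|ny]; first by rewrite mulr0; left.
right; rewrite vM //; vlia.
Qed.
Lemma II1 : II 1 0. Proof. by right; rewrite v1. Qed.

Hypothesis complete : forall u, v_cauchy v u -> exists l, v_converges v u l.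

Section Hens.
Variable c : k.
Hypothesis Ic : II c 1.
Fixpoint hs (n : nat) : k := if n is n'.+1 then hs n' ^+ 2 + c else 0.

Lemma hs_int n : II (hs n) 1.
Proof.
elim: n => [|n IH] /=; first by left.
apply: IIadd => //; rewrite expr2; apply: II_weak (IImul IH IH); vlia.
Qed.

Lemma hs_diff n : II (hs n.+1 - hs n) n.+1%:Z.
Proof.
elim: n => [|n IH]; first by rewrite /= subr0 expr2 mul0r add0r.
have -> : hs n.+2 - hs n.+1 = (hs n.+1 - hs n) * (hs n.+1 + hs n).
  rewrite /=; ring.
apply: II_weak (IImul IH (IIadd (hs_int _) (hs_int _))); vlia.
Qed.

Lemma hs_tele p j : II (hs (p + j) - hs p) p.+1%:Z.
Proof.
elim: j => [|j IH]; first by rewrite addn0 subrr; left.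
have -> : hs (p + j.+1) - hs p = (hs (p + j).+1 - hs (p + j)) + (hs (p + j) - hs p).
  by rewrite addnS; ring.
apply: IIadd => //; apply: II_weak (hs_diff _); vlia.
Qed.

Lemma hs_close m p : II (hs m - hs p) (minn m p).+1%:Z.
Proof.
case: (leqP p m) => h.
  rewrite -(subnKC h); exact: hs_tele.
rewrite -opprB; apply: IIN; rewrite -(subnKC (ltnW h)); exact: hs_tele.
Qed.

Lemma hensel : exists y, y ^+ 2 - y + c = 0.
Proof.
have [l hl] : exists l, v_converges v hs l.
  apply: complete => n; exists `|n|%N => m p hm hp.
  case: (hs_close m p) => h; [left|right] => //.
  apply: le_trans h; have : (`|n|%N <= minn m p)%N by rewrite leq_min hm hp.
  move=> hh; have : n <= `|n|%N%:Z by exact: lez_abs. vlia.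
case: (eqVneq (l ^+ 2 - l + c) 0) => [E|nE]; first by exists l.
exfalso.
set n0 := Num.max (v (l ^+ 2 - l + c) + 1) 1.
have [N HN] := hl n0.
pose m := maxn N `|n0|%N.
have hm1 : (N <= m)%N by rewrite leq_maxl.
have hm2 : (`|n0|%N <= m)%N by rewrite leq_maxr.
have h1 : II (hs m - l) n0 by case: (HN m hm1) => h; [left|right].
have h1' : II (l - hs m) n0 by rewrite -opprB; apply: IIN.
have n01 : 1 <= n0 by rewrite /n0 le_max lexx orbT.
have h2 : II (l + hs m) 1.
  have -> : l + hs m = (l - hs m) + (hs m + hs m) by ring.
  apply: IIadd; first exact: II_weak h1'.
  by apply: IIadd; apply: hs_int.
have h3 : II (hs m.+1 - hs m) n0.
  apply: II_weak (hs_diff _); have : n0 <= `|n0|%N%:Z by exact: lez_abs. vlia.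
have E : l ^+ 2 - l + c = (l - hs m) * (l + hs m) - (l - hs m) + (hs m.+1 - hs m).
  by rewrite /=; ring.
have : II (l ^+ 2 - l + c) n0.
  rewrite E; apply: IIadd => //; apply: IIsub => //.
  apply: II_weak (IImul h1' h2); vlia.
case=> [h|h]; first by rewrite h eqxx in nE.
have : v (l ^+ 2 - l + c) + 1 <= n0 by rewrite /n0 le_max lexx.
vlia.
Qed.
End Hens.

End Val.


Section Ultra.
Variable k : fieldType.
Variable v : k -> int.
Hypothesis vM : forall x y, x != 0 -> y != 0 -> v (x * y) = v x + v y.
Hypothesis vA : forall x y, x != 0 -> y != 0 -> x + y != 0 ->
                   Num.min (v x) (v y) <= v (x + y).
Hypothesis complete : forall u, v_cauchy v u -> exists l, v_converges v u l.
Hypothesis two0 : (2%:R : k) != 0.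
Hypothesis v2 : 0 < v 2%:R.
Variables alpha beta : k.
Hypothesis div : quat_division alpha beta.
Local Notation mul := (qmul alpha beta).
Local Notation nrm := (qnorm alpha beta).
Local Notation II := (II v).

Ltac vlia := repeat (match goal with |- context [v ?x] => let z := fresh "z" in set z := v x in *; clearbody z end
  || match goal with H : context [v ?x] |- _ => let z := fresh "z" in set z := v x in *; clearbody z end); lia.

Lemma qk_of_sub x s : qsub x (qk s) = qzero k -> x = qk s.
Proof. by move=> h; rewrite -(qsubK x (qk s)) h qadd0l. Qed.

Lemma trace_int x : II (nrm x) 0 -> II (2%:R * q0 x) 0.
Proof.
move=> hN.
case: (eqVneq (nrm x) 0) => [N0|nN].
  by rewrite (qnorm_eq0 N0 div) /=; left; rewrite mulr0.
apply: NNPP => hT.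
have nT : 2%:R * q0 x != 0 by apply/eqP => h; apply: hT; left.
have vT : v (2%:R * q0 x) < 0.
  rewrite ltNge; apply/negP => h; apply: hT; right; exact: h.
have vN : 0 <= v (nrm x) by case: hN => [h|//]; rewrite h eqxx in nN.
set T := 2%:R * q0 x in nT vT hT.
pose c := nrm x / T ^+ 2.
have Ic : II c 1.
  right; rewrite /c vD ?expf_neq0 // vX //; vlia.
have [y hy] := hensel vM vA complete Ic.
pose r := T * y.
have E : r ^+ 2 - (2%:R * q0 x) * r + nrm x = 0.
  rewrite -/T; have -> : r ^+ 2 - T * r + nrm x = T ^+ 2 * (y ^+ 2 - y + c).
    rewrite /r /c; field; rewrite ?expf_neq0 //.
  by rewrite hy mulr0.
have [h|h] := qnozd div (qfactor E).
- move: (qk_of_sub h) => xe. move: nN vN vT nT; rewrite /T xe qnormk /= => nN vN vT nT.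
  have nr : r != 0 by apply: contraNneq nN => ->; rewrite expr2 mulr0.
  rewrite vX // in vN. rewrite vM // in vT. vlia.
- move: (qk_of_sub h) => xe. move: nN vN vT nT; rewrite /T xe qnormk /= => nN vN vT nT.
  set s := 2%:R * q0 x - r in nN vN vT nT *.
  have ns : s != 0 by apply: contraNneq nN => ->; rewrite expr2 mulr0.
  rewrite vX // in vN. rewrite vM // in vT. vlia.
Qed.

Lemma qnorm_add1 z : nrm (qadd z (qone k)) = 1 + 2%:R * q0 z + nrm z.
Proof. case: z => z0 z1 z2 z3; rewrite /qone /qk /qadd /qnorm /=; ring. Qed.

Lemma norm_core x y : nrm x != 0 -> nrm y != 0 -> v (nrm y) <= v (nrm x) ->
  nrm (qadd x y) != 0 -> v (nrm y) <= v (nrm (qadd x y)).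
Proof.
move=> nx ny le nxy.
pose z := mul x (qinv alpha beta y).
have E : qadd x y = mul (qadd z (qone k)) y.
  by rewrite qmulDl qmul1l /z -qmulA qinvl // qmul1.
have nz : nrm z = nrm x / nrm y by rewrite /z qnormM qnorm_inv.
have Iz : II (nrm z) 0.
  right; rewrite nz vD //; vlia.
have I1 : II (nrm (qadd z (qone k))) 0.
  rewrite qnorm_add1; apply: IIadd => //; first apply: IIadd => //.
  - exact: II1.
  - exact: trace_int.
move: nxy; rewrite E qnormM => nxy.
have n1 : nrm (qadd z (qone k)) != 0 by apply: contraNneq nxy => ->; rewrite mul0r.
rewrite vM //; case: I1 => [h|h]; first by rewrite h eqxx in n1.
vlia.
Qed.

Definition IN x m := II (nrm x) m.

Lemma IN_add x y m : IN x m -> IN y m -> IN (qadd x y) m.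
Proof.
rewrite /IN => hx hy.
case: (eqVneq (nrm x) 0) => [/qnorm_eq0 /(_ div) ->|nx]; first by rewrite qadd0l.
case: (eqVneq (nrm y) 0) => [/qnorm_eq0 /(_ div) ->|ny]; first by rewrite qadd0.
case: (eqVneq (nrm (qadd x y)) 0) => [->|nxy]; first by left.
case: hx => [h|hx]; first by rewrite h eqxx in nx.
case: hy => [h|hy]; first by rewrite h eqxx in ny.
right; case: (lerP (v (nrm y)) (v (nrm x))) => h.
  have := norm_core nx ny h nxy; vlia.
have := norm_core ny nx (ltW h); rewrite qaddC => nxy'; have := nxy' nxy; vlia.
Qed.

Lemma IN_opp x m : IN x m -> IN (qopp x) m.
Proof. by rewrite /IN qnormN. Qed.

Lemma IN_scal c x m : II c 0 -> IN x m -> IN (qscal c x) m.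
Proof.
move=> hc hx; rewrite /IN qnormZ.
have -> : m = (0 + 0) + m by rewrite !add0r.
apply: IImul => //; rewrite expr2; exact: IImul.
Qed.

Lemma IN_mul x y m n : IN x m -> IN y n -> IN (mul x y) (m + n).
Proof. by move=> hx hy; rewrite /IN qnormM; apply: IImul. Qed.

Lemma IN_weak x m n : n <= m -> IN x m -> IN x n.
Proof. exact: II_weak. Qed.

Lemma qcomb_cons (c : k) cs (g : quat k) gs : qcomb (c :: cs) (g :: gs) = qadd (qscal c g) (qcomb cs gs).
Proof. by []. Qed.

Lemma qcomb_bound gs : exists B, forall cs, size cs = size gs ->
  (forall i, (i < size cs)%N -> integral v (nth 0 cs i)) -> IN (qcomb cs gs) B.
Proof.
elim: gs => [|g gs [B IH]].
  by exists 0 => -[|c cs] // _ _; left; rewrite /qcomb /= qnorm_zero.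
pose Bg := if nrm g == 0 then 0 else v (nrm g).
exists (Num.min Bg B) => -[|c cs] //= [hs] hi.
rewrite qcomb_cons; apply: IN_add.
- apply: (@IN_weak _ Bg); first by rewrite ge_min lexx.
  apply: IN_scal; first exact: (hi 0%N).
  rewrite /IN /Bg; case: eqP => [->|_]; [by left|by right].
- apply: (@IN_weak _ B); first by rewrite ge_min lexx orbT.
  apply: IH => // i hi'; exact: (hi i.+1).
Qed.

Fixpoint qpow x n := if n is n'.+1 then mul x (qpow x n') else qone k.

Lemma qnorm_pow x n : nrm (qpow x n) = nrm x ^+ n.
Proof. elim: n => [|n IH] /=; first by rewrite qnorm1. by rewrite qnormM IH exprS. Qed.

Lemma order_int (O : quat k -> Prop) : is_order alpha beta v O -> forall x, O x -> IN x 0.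
Proof.
move=> [O1 [Oadd [Oopp [Omul [Oscal [[gs [_ Ofg]] _]]]]]] x Ox.
have [B HB] := qcomb_bound gs.
have Bx : forall n, IN (qpow x n) B.
  move=> n; have : O (qpow x n) by elim: n => [|n IH] //=; apply: Omul.
  move/Ofg => [cs [hs [hi ->]]]; exact: HB.
apply: NNPP => hx.
have nx : nrm x != 0 by apply/eqP => h; apply: hx; left.
have vx : v (nrm x) < 0 by rewrite ltNge; apply/negP => h; apply: hx; right.
have := Bx `|B|%N.+1; rewrite /IN qnorm_pow; case => [h|h].
  by move/eqP: h; rewrite expf_eq0 (negbTE nx) andbF.
rewrite vX // in h. have : - B <= `|B|%N%:Z by rewrite -abszN lez_abs. move: h vx.
move: (v (nrm x)) (`|B|%N) => z n h1 h2 h3.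
move: h1; rewrite -[n.+1]addn1 PoszD => h1. nia.
Qed.

End Ultra.


Lemma min_exists (T : Type) (P : T -> Prop) (f : T -> int) (B : int) :
  (forall t, P t -> B <= f t) -> (exists t, P t) ->
  exists t, P t /\ forall t', P t' -> f t <= f t'.
Proof.
move=> hB [t0 Pt0]; apply: NNPP => H.
have all : forall n : nat, forall t, P t -> (n%:Z <= f t - B).
  elim=> [|n IH] t Pt; first by have := hB t Pt; lia.
  have := IH t Pt; rewrite le_eqVlt => /orP [/eqP e|]; last by lia.
  exfalso; apply: H; exists t; split => // t' Pt'.
  have := IH t' Pt'; lia.
have := all `|f t0 - B|%N.+1 t0 Pt0. have := lez_abs (f t0 - B). lia.
Qed.

Section Order4.
Variable k : fieldType.
Variable v : k -> int.
Hypothesis vM : forall x y, x != 0 -> y != 0 -> v (x * y) = v x + v y.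
Hypothesis vA : forall x y, x != 0 -> y != 0 -> x + y != 0 ->
                   Num.min (v x) (v y) <= v (x + y).
Hypothesis complete : forall u, v_cauchy v u -> exists l, v_converges v u l.
Hypothesis two0 : (2%:R : k) != 0.
Hypothesis v2 : 0 < v 2%:R.
Variable pi : k.
Hypothesis pi0 : pi != 0.
Hypothesis vpi : v pi = 1.
Variables alpha beta : k.
Hypothesis div : quat_division alpha beta.
Local Notation mul := (qmul alpha beta).
Local Notation nrm := (qnorm alpha beta).
Local Notation II := (II v).
Local Notation IN := (IN v alpha beta).

Ltac vlia := repeat (match goal with |- context [v ?x] => let z := fresh "z" in set z := v x in *; clearbody z end
  || match goal with H : context [v ?x] |- _ => let z := fresh "z" in set z := v x in *; clearbody z end); lia.

Definition cd (i : nat) (x : quat k) : k :=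
  match i with 0 => q0 x | 1 => q1 x | 2 => q2 x | _ => q3 x end.

Lemma cd_comb i c (x b : quat k) : cd i (qadd x (qopp (qscal c b))) = cd i x - c * cd i b.
Proof. by case: i => [|[|[|i]]]. Qed.

Lemma cd_zero (x : quat k) : (forall i, (i < 4)%N -> cd i x = 0) -> x = qzero k.
Proof.
case: x => x0 x1 x2 x3 h.
move: (h 0%N erefl) (h 1%N erefl) (h 2%N erefl) (h 3%N erefl) => /= -> -> -> ->; by [].
Qed.

Lemma qadd_sub_scal c (x b : quat k) : qadd (qscal c b) (qadd x (qopp (qscal c b))) = x.
Proof. qsolve. Qed.

Definition fgen (M : quat k -> Prop) (P : quat k -> Prop) (gs : seq (quat k)) :=
  (forall i, (i < size gs)%N -> M (nth (qzero k) gs i)) /\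
  forall x, M x -> P x -> exists cs : seq k, size cs = size gs /\
     (forall i, (i < size cs)%N -> integral v (nth 0 cs i)) /\ x = qcomb cs gs.

Lemma echelon (M : quat k -> Prop) :
  (forall x y, M x -> M y -> M (qadd x y)) -> (forall x, M x -> M (qopp x)) ->
  (forall c x, II c 0 -> M x -> M (qscal c x)) ->
  (forall i, exists B, forall x, M x -> II (cd i x) B) ->
  exists gs, fgen M (fun _ => True) gs.
Proof.
move=> Madd Mopp Mscal Mb.
have claim : forall n, exists gs, fgen M (fun x => forall i, (i < 4 - n)%N -> cd i x = 0) gs.
  elim=> [|n [gs [Hgs IH]]].
    exists [::]; split => // x _ hx; exists [::]; split => //; split => //.
    exact: cd_zero.
  case: (leqP 4 n) => hn.
    exists gs; split => // x Mx hx; apply: IH => // i hi; exfalso; lia.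
  set j := (4 - n.+1)%N.
  have hj : (4 - n = j.+1)%N by rewrite /j; lia.
  pose P b := M b /\ (forall i, (i < j)%N -> cd i b = 0) /\ cd j b != 0.
  case: (classic (exists b, P b)) => [exP|noP].
  - have [B HB] := Mb j.
    have hB' : forall t, P t -> B <= v (cd j t).
      move=> t [Mt [_ nt]]; case: (HB t Mt) => // h; by rewrite h eqxx in nt.
    have [b [[Mb' [zb nb]] minb]] := @min_exists _ P (fun b => v (cd j b)) B hB' exP.
    exists (b :: gs); split.
      by case=> [|i] //= hi; apply: Hgs.
    move=> x Mx zx.
    pose c := cd j x / cd j b.
    have Ic : II c 0.
      case: (eqVneq (cd j x) 0) => [e|nx]; first by rewrite /c e mul0r; left.
      right; rewrite /c vD //; have := minb x (conj Mx (conj zx nx)) => /=; vlia.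
    pose x' := qadd x (qopp (qscal c b)).
    have Mx' : M x' by apply: Madd => //; apply: Mopp; apply: Mscal.
    have zx' : forall i, (i < 4 - n)%N -> cd i x' = 0.
      rewrite hj => i hi; rewrite /x' cd_comb.
      case: (ltngtP i j) => hij.
      + by rewrite zx // zb // mulr0 subrr.
      + lia.
      + by rewrite hij /c mulfVK // subrr.
    have [cs [hs [hi ex]]] := IH x' Mx' zx'.
    exists (c :: cs); split; first by rewrite /= hs.
    split; first by case=> [|i] //= hi'; apply: hi.
    by rewrite qcomb_cons -ex /x' qadd_sub_scal.
  - exists gs; split => // x Mx zx; apply: IH => //; rewrite hj => i hi.
    case: (ltngtP i j) => hij.
    + exact: zx.
    + lia.
    + rewrite hij; apply: NNPP => nz; apply: noP; exists x; split => //; split => //.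
      by apply/eqP.
have [gs [Hgs IH]] := claim 4%N.
by exists gs; split => // x Mx _; apply: IH.
Qed.


Lemma coord_bound_e i e kap : nrm e != 0 -> kap != 0 ->
  (forall x, q0 (mul x e) = kap * cd i x) ->
  exists B, forall x, IN x 0 -> II (cd i x) B.
Proof.
move=> ne nk he.
pose n := `|v (nrm e)|%N.
exists (- (v 2%:R + n%:Z + v kap)) => x hx.
pose y := qscal (pi ^+ n) (mul x e).
have Iy : IN y 0.
  rewrite /IN /y qnormZ qnormM.
  case: (eqVneq (nrm x) 0) => [->|nx]; first by rewrite mul0r mulr0; left.
  case: hx => [h|hx]; first by rewrite h eqxx in nx.
  right; rewrite -exprM vM ?expf_neq0 ?mulf_neq0 // vM // !vX //.
  have := lez_abs (- v (nrm e)); rewrite abszN -/n.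
  move: hx; rewrite vpi. move: (v (nrm x)) (v (nrm e)) => a b; lia.
have := trace_int vM vA complete two0 v2 div Iy.
rewrite /y; have -> : q0 (qscal (pi ^+ n) (mul x e)) = pi ^+ n * q0 (mul x e) by [].
rewrite he.
case: (eqVneq (cd i x) 0) => [->|nc]; first by left.
case=> [h|h].
  by move/eqP: h; rewrite !mulf_eq0 (negbTE two0) (negbTE nk) (negbTE nc) expf_eq0 (negbTE pi0) andbF.
right; move: h; rewrite !vM ?mulf_neq0 ?expf_neq0 // vX // vpi.
move: (v 2%:R) (v kap) (v (cd i x)) => a b c; lia.
Qed.

Lemma alpha0 : alpha != 0.
Proof.
have := qnorm_neq0 (x := Quat 0 1 0 0) div.
rewrite /qnorm /= => h; apply/eqP => a0; move: h; rewrite a0.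
have : (Quat 0 1 0 0 : quat k) <> qzero k by case; move/eqP; rewrite oner_eq0.
move=> hz /(_ hz) /eqP h; apply: h; ring.
Qed.

Lemma beta0 : beta != 0.
Proof.
have := qnorm_neq0 (x := Quat 0 0 1 0) div.
rewrite /qnorm /= => h; apply/eqP => a0; move: h; rewrite a0.
have : (Quat 0 0 1 0 : quat k) <> qzero k by case; move/eqP; rewrite oner_eq0.
move=> hz /(_ hz) /eqP h; apply: h; ring.
Qed.

Lemma coord_bound i : exists B, forall x, IN x 0 -> II (cd i x) B.
Proof.
have qn : forall e : quat k, e <> qzero k -> nrm e != 0 by move=> e; exact: qnorm_neq0.
case: i => [|[|[|i]]].
- apply: (@coord_bound_e 0 (qone k) 1); rewrite ?qnorm1 ?oner_neq0 //.
  by move=> x; rewrite qmul1 mul1r.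
- apply: (@coord_bound_e 1 (Quat 0 1 0 0) alpha); rewrite ?alpha0 //.
    by apply: qn; case; move/eqP; rewrite oner_eq0.
  by case=> x0 x1 x2 x3; rewrite /qmul /=; ring.
- apply: (@coord_bound_e 2 (Quat 0 0 1 0) beta); rewrite ?beta0 //.
    by apply: qn; case; move/eqP; rewrite oner_eq0.
  by case=> x0 x1 x2 x3; rewrite /qmul /=; ring.
- apply: (@coord_bound_e i.+3 (Quat 0 0 0 1) (- (alpha * beta))).
  + by apply: qn; case; move/eqP; rewrite oner_eq0.
  + by rewrite oppr_eq0 mulf_neq0 ?alpha0 ?beta0.
  + by case=> x0 x1 x2 x3; rewrite /qmul /=; ring.
Qed.

Lemma S_order : is_order alpha beta v (fun x => IN x 0).
Proof.
have Sadd : forall x y, IN x 0 -> IN y 0 -> IN (qadd x y) 0.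
  by move=> x y; apply: IN_add.
have Sopp : forall x, IN x 0 -> IN (qopp x) 0 by move=> x; apply: IN_opp.
have Sscal : forall c x, II c 0 -> IN x 0 -> IN (qscal c x) 0.
  by move=> c x; apply: IN_scal.
split; first by right; rewrite qnorm1 v1.
split => //; split => //.
split; first by move=> x y hx hy; rewrite -[0]addr0; apply: IN_mul.
split => //.
split.
  have [gs [Hgs IH]] := echelon Sadd Sopp Sscal coord_bound.
  by exists gs; split => // x hx; apply: IH.
move=> x; exists (pi ^+ `|v (nrm x)|%N); split; first by rewrite expf_neq0.
rewrite /IN qnormZ; case: (eqVneq (nrm x) 0) => [->|nx]; first by rewrite mulr0; left.
right; rewrite -exprM vM ?expf_neq0 // vX // vpi.
have := lez_abs (- v (nrm x)); rewrite abszN. move: (v (nrm x)) (`|v (nrm x)|%N) => a b; lia.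
Qed.

Lemma int_in_max (O : quat k -> Prop) : maximal_order alpha beta v O ->
  forall x, IN x 0 -> O x.
Proof.
move=> [oO maxO]; apply: (maxO (fun x => IN x 0)); first exact: S_order.
move=> x Ox; exact: (@order_int k v vM vA complete two0 v2 alpha beta div O oO x Ox).
Qed.

Lemma unit_in_max (O : quat k -> Prop) d : maximal_order alpha beta v O ->
  nrm d != 0 -> v (nrm d) = 0 -> O d /\ O (qinv alpha beta d).
Proof.
move=> mO nd vd; split; apply: int_in_max => //; right.
  by rewrite vd.
by rewrite qnorm_inv // vV // vd.
Qed.

End Order4.


Section Transport.
Variable k : fieldType.
Variables alpha beta : k.
Local Notation mul := (qmul alpha beta).
Local Notation nrm := (qnorm alpha beta).
Local Notation inv := (qinv alpha beta).

Lemma qscalD c (x y : quat k) : qscal c (qadd x y) = qadd (qscal c x) (qscal c y).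
Proof. qsolve. Qed.

Lemma qsub_conjZ c (x : quat k) : qsub (qscal c x) (qconj (qscal c x)) = qscal c (qsub x (qconj x)).
Proof. qsolve. Qed.

Lemma qinvZ c x : c != 0 -> inv (qscal c x) = qscal c^-1 (inv x).
Proof.
move=> nc; rewrite /qinv qnormZ qconjZ !qscalA; congr qscal.
case: (eqVneq (nrm x) 0) => [->|nx]; first by rewrite mulr0 invr0 !mul0r mulr0.
by field; rewrite nx nc.
Qed.

Lemma qinvK x : nrm x != 0 -> inv (inv x) = x.
Proof.
move=> nx; have ni : nrm (inv x) != 0 by rewrite qnorm_inv // invr_eq0.
by rewrite -[RHS](qmul1l alpha beta) -(qinvl ni) -qmulA qinvl // qmul1.
Qed.

Lemma conj_core d b b' lam : lam != 0 -> nrm d != 0 ->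
  qscal lam b' = mul d (mul b (qconj d)) ->
  mul (inv d) (mul b' (qconj (inv d))) = qscal lam^-1 b.
Proof.
move=> nl nd E.
have -> : b' = qscal lam^-1 (mul d (mul b (qconj d))).
  by rewrite -E qscalA mulVf // qscal1.
rewrite qmulZl qmulZr; congr qscal.
rewrite !qmulA qinvl // qmul1l -qmulA -qconjM qinvl // /qone /qconj /qk /=.
by rewrite oppr0 -/(qk 1) -/(qone k) qmul1.
Qed.

Definition psi (d1 d2 : quat k) (x : vec k) : vec k := (mul x.1 (inv d1), mul x.2 (inv d2)).

Variables b1 b2 b1' b2' d1 d2 : quat k.
Variable lam : k.
Hypothesis nl : lam != 0.
Hypothesis nd1 : nrm d1 != 0.
Hypothesis nd2 : nrm d2 != 0.
Hypothesis E1 : qscal lam b1' = mul d1 (mul b1 (qconj d1)).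
Hypothesis E2 : qscal lam b2' = mul d2 (mul b2 (qconj d2)).

Local Notation ps := (psi d1 d2).

Lemma hform_psi x y : hform alpha beta b1' b2' (ps x) (ps y) = qscal lam^-1 (hform alpha beta b1 b2 x y).
Proof.
rewrite /hform /psi /= !qconjM.
have h1 : forall (x1 y1 d b b' : quat k), nrm d != 0 -> qscal lam b' = mul d (mul b (qconj d)) ->
   mul (mul x1 (inv d)) (mul b' (mul (qconj (inv d)) (qconj y1))) = qscal lam^-1 (mul x1 (mul b (qconj y1))).
  move=> x1 y1 d b b' nd E.
  have := conj_core nl nd E => C.
  transitivity (mul x1 (mul (mul (inv d) (mul b' (qconj (inv d)))) (qconj y1))).
    by rewrite !qmulA.
  by rewrite C qmulZl qmulZr.
rewrite (h1 _ _ _ _ _ nd1 E1) (h1 _ _ _ _ _ nd2 E2).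
by rewrite qscalD.
Qed.

Lemma psi_sub x y : ps (vsub x y) = vsub (ps x) (ps y).
Proof. by rewrite /psi /vsub /qsub /= !qmulDl !qmulNl. Qed.

Lemma psi_lscal q x : ps (vlscal alpha beta q x) = vlscal alpha beta q (ps x).
Proof. by rewrite /psi /vlscal /= !qmulA. Qed.

Lemma rot_psi s sg x :
  simple_rot alpha beta b1' b2' (ps s) (qscal lam^-1 sg) (ps x) = ps (simple_rot alpha beta b1 b2 s sg x).
Proof.
rewrite /simple_rot hform_psi qinvZ ?invr_neq0 // invrK qmulZl qmulZr qscalA mulVf // qscal1.
by rewrite psi_sub psi_lscal.
Qed.

Lemma rot_prod_cons bb1 bb2 r rs x : rot_prod alpha beta bb1 bb2 (r :: rs) x =
  simple_rot alpha beta bb1 bb2 r.1 r.2 (rot_prod alpha beta bb1 bb2 rs x).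
Proof. by []. Qed.

Definition fr (r : vec k * quat k) := (ps r.1, qscal lam^-1 r.2).

Lemma rot_prod_psi rs x :
  rot_prod alpha beta b1' b2' (map fr rs) (ps x) = ps (rot_prod alpha beta b1 b2 rs x).
Proof.
elim: rs => [|r rs IH] //.
by rewrite map_cons !rot_prod_cons IH rot_psi.
Qed.


Lemma valid_fr r : valid_rot alpha beta b1 b2 r -> valid_rot alpha beta b1' b2' (fr r).
Proof.
case=> nz E; split => /=.
  move=> h; apply: nz; by rewrite -[r.2]qscal1 -(mulfV nl) -qscalA h /qzero qscalk mulr0.
by rewrite qsub_conjZ E hform_psi.
Qed.

Lemma all_valid_fr rs : all_valid alpha beta b1 b2 rs -> all_valid alpha beta b1' b2' (map fr rs).
Proof. elim: rs => [|r rs IH] //= [h1 h2]; split; [exact: valid_fr|exact: IH]. Qed.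

Lemma norm_prod_fr rs : norm_prod alpha beta (map fr rs) = norm_prod alpha beta rs * (lam^-1 ^+ 2) ^+ size rs.
Proof.
elim: rs => [|r rs IH] /=; first by rewrite expr0 mulr1.
rewrite IH qnormZ; move: (lam^-1 ^+ 2) => z; rewrite exprS; ring.
Qed.

Variable O : quat k -> Prop.
Hypothesis Omul : forall x y, O x -> O y -> O (mul x y).
Hypothesis Od1 : O d1.
Hypothesis Od2 : O d2.
Hypothesis Oi1 : O (inv d1).
Hypothesis Oi2 : O (inv d2).

Definition psinv (x : vec k) : vec k := (mul x.1 d1, mul x.2 d2).

Lemma psK x : ps (psinv x) = x.
Proof. by case: x => x1 x2; rewrite /psi /psinv /= -!qmulA !qinvr // !qmul1. Qed.
Lemma psinvK x : psinv (ps x) = x.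
Proof. by case: x => x1 x2; rewrite /psi /psinv /= -!qmulA !qinvl // !qmul1. Qed.

Lemma ps_lat x : in_lattice O x -> in_lattice O (ps x).
Proof. by case=> h1 h2; split; apply: Omul. Qed.
Lemma psinv_lat x : in_lattice O x -> in_lattice O (psinv x).
Proof. by case=> h1 h2; split; apply: Omul. Qed.

Lemma Hgroup_transport c : Hgroup alpha beta O b1 b2 c -> Hgroup alpha beta O b1' b2' c.
Proof.
case=> nc [rs [val [pres1 pres2] [t [nt ct]]]].
split => //; exists (map fr rs); split.
- exact: all_valid_fr.
- split.
  + move=> x Lx; rewrite -(psK x) rot_prod_psi; apply: ps_lat; apply: pres1.
    exact: psinv_lat.
  + move=> y Ly; have [x [Lx ex]] := pres2 _ (psinv_lat Ly).
    exists (ps x); split; first exact: ps_lat.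
    by rewrite rot_prod_psi ex psK.
- exists (t * lam ^+ size rs); split; first by rewrite mulf_neq0 // expf_neq0.
  have L : (lam^-1 ^+ 2) ^+ size rs * (lam ^+ size rs) ^+ 2 = 1.
    by rewrite -!exprM mulnC -exprMn mulVf // expr1n.
  rewrite norm_prod_fr ct; move: L; move: ((lam^-1 ^+ 2) ^+ size rs) (lam ^+ size rs) => A B L.
  transitivity (norm_prod alpha beta rs * t ^+ 2 * (A * B ^+ 2)); first by rewrite L mulr1.
  ring.
Qed.

End Transport.


Lemma int_parity (m : int) : exists h : int, m = 2 * h \/ m = 2 * h + 1.
Proof.
exists (m %/ 2)%Z; have E := divz_eq m 2.
have h0 : 0 <= (m %% 2)%Z by apply: modz_ge0.
have h1 : (m %% 2)%Z < 2 by apply: ltz_pmod.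
move: E h0 h1; move: (m %/ 2)%Z (m %% 2)%Z => a b; lia.
Qed.

Lemma two_neq0 (k : fieldType) : [pchar k] =i pred0 -> (2%:R : k) != 0.
Proof.
move=> h; apply/negP => e; have := h 2%N; by rewrite !inE /= e.
Qed.

Lemma qadd_eq0 (k : fieldType) (x y : quat k) : qadd x y = qzero k -> y = qopp x.
Proof.
move=> h; have h0 := congr1 (@q0 k) h; have h1 := congr1 (@q1 k) h; have h2 := congr1 (@q2 k) h; have h3 := congr1 (@q3 k) h.
move: h0 h1 h2 h3 {h}; case: x => ? ? ? ?; case: y => ? ? ? ?; rewrite /qopp /= => h0 h1 h2 h3.
f_equal; apply/eqP; rewrite -addr_eq0; apply/eqP; by rewrite addrC.
Qed.
Lemma qscalN (k : fieldType) c (x : quat k) : qscal (- c) x = qopp (qscal c x).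
Proof. qsolve. Qed.
Lemma qoppK (k : fieldType) (x : quat k) : qopp (qopp x) = x.
Proof. qsolve. Qed.
Lemma qadd2 (k : fieldType) (x : quat k) : qadd x x = qscal 2%:R x.
Proof. qsolve. Qed.

Section Final.
Variable k : fieldType.
Variables alpha beta : k.
Local Notation mul := (qmul alpha beta).
Local Notation nrm := (qnorm alpha beta).
Local Notation inv := (qinv alpha beta).

Lemma Hgroup_equiv (O : quat k -> Prop) b1 b2 b1' b2' d1 d2 lam :
  (forall x y, O x -> O y -> O (mul x y)) ->
  lam != 0 -> nrm d1 != 0 -> nrm d2 != 0 ->
  O d1 -> O d2 -> O (inv d1) -> O (inv d2) ->
  qscal lam b1' = mul d1 (mul b1 (qconj d1)) ->
  qscal lam b2' = mul d2 (mul b2 (qconj d2)) ->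
  forall c, Hgroup alpha beta O b1 b2 c <-> Hgroup alpha beta O b1' b2' c.
Proof.
move=> Omul nl n1 n2 O1 O2 Oi1 Oi2 E1 E2 c; split.
  exact: (Hgroup_transport nl n1 n2 E1 E2 Omul O1 O2 Oi1 Oi2).
have ni1 : nrm (inv d1) != 0 by rewrite qnorm_inv // invr_eq0.
have ni2 : nrm (inv d2) != 0 by rewrite qnorm_inv // invr_eq0.
apply: (Hgroup_transport (invr_neq0 nl) ni1 ni2 _ _ Omul Oi1 Oi2); rewrite ?qinvK //.
- by rewrite (conj_core nl n1 E1).
- by rewrite (conj_core nl n2 E2).
Qed.

Lemma pure_comm a (x y : k) : mul (qadd (qk x) (qscal y a)) a = mul a (qadd (qk x) (qscal y a)).
Proof. qsolve. Qed.

Lemma nrm_lin a (x y : k) : pure a -> nrm (qadd (qk x) (qscal y a)) = x ^+ 2 + y ^+ 2 * nrm a.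
Proof. case: a => a0 a1 a2 a3; rewrite /pure /= => ->; rewrite /qnorm /qadd /qk /qscal /=; ring. Qed.

Lemma pure_scal c (q : quat k) : pure q -> pure (qscal c q).
Proof. by rewrite /pure /= => ->; rewrite mulr0. Qed.

Lemma comm_sq a p : pure a -> pure p -> nrm a = nrm p -> mul (qadd a p) a = mul p (qadd a p).
Proof.
move=> pa pp E; rewrite qmulDl qmulDr (pure_sq _ _ pa) (pure_sq _ _ pp) E qaddC //.
Qed.

Variable v : k -> int.
Hypothesis vM : forall x y, x != 0 -> y != 0 -> v (x * y) = v x + v y.
Hypothesis vA : forall x y, x != 0 -> y != 0 -> x + y != 0 ->
                   Num.min (v x) (v y) <= v (x + y).
Hypothesis complete : forall u, v_cauchy v u -> exists l, v_converges v u l.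
Hypothesis two0 : (2%:R : k) != 0.
Hypothesis v2 : 0 < v 2%:R.
Variable pi : k.
Hypothesis pi0 : pi != 0.
Hypothesis vpi : v pi = 1.
Hypothesis div : quat_division alpha beta.
Variable O : quat k -> Prop.
Hypothesis maxO : maximal_order alpha beta v O.

Lemma val_exists (g : int) : exists w, w != 0 /\ v w = g.
Proof.
case: (lerP 0 g) => hg.
  exists (pi ^+ `|g|%N); split; first by rewrite expf_neq0.
  by rewrite vX // vpi mulr1 gez0_abs.
exists (pi ^+ `|g|%N)^-1; split; first by rewrite invr_eq0 expf_neq0.
rewrite vV ?expf_neq0 // vX // vpi mulr1 ltz0_abs //; lia.
Qed.

Lemma conj_to a z0 q' t : pure a -> a <> qzero k -> mul z0 a = mul a z0 -> nrm z0 != 0 ->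
  ~ (exists m : int, v (nrm z0) = 2 * m) ->
  pure q' -> t != 0 -> nrm q' = nrm a * t ^+ 2 ->
  exists d mu, [/\ nrm d != 0, v (nrm d) = 0, mu != 0 & mul d (mul a (qconj d)) = qscal mu q'].
Proof.
move=> pa na cz nz0 oz pq nt E.
have [s [ns [nu pp]]] : exists s, s != 0 /\ qadd a (qscal s^-1 q') <> qzero k /\ nrm (qscal s^-1 q') = nrm a.
  have Nq : forall s, s ^+ 2 = t ^+ 2 -> s != 0 -> nrm (qscal s^-1 q') = nrm a.
    by move=> s es ns; rewrite qnormZ E exprVn es mulrCA mulVf ?mulr1 // expf_neq0.
  case: (classic (qadd a (qscal t^-1 q') = qzero k)) => h; last by exists t; split => //; split => //; exact: Nq.
  exists (- t); split; first by rewrite oppr_eq0.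
  split; last by apply: Nq; rewrite ?oppr_eq0 // sqrrN.
  have e : qscal (- t)^-1 q' = a.
    by rewrite invrN qscalN (qadd_eq0 h) qoppK.
  rewrite e => h2; apply: na.
  by rewrite -(qscal1 a) -(mulVf two0) -qscalA -qadd2 h2 /qzero qscalk mulr0.
set p := qscal s^-1 q' in nu pp.
have pp' : pure p by apply: pure_scal.
set u := qadd a p in nu.
have hc : mul u a = mul p u by apply: comm_sq => //.
have nuu : nrm u != 0 by apply: qnorm_neq0.
have fin : forall z, mul z a = mul a z -> nrm z != 0 -> v (nrm z) = - v (nrm u) ->
    exists d mu, [/\ nrm d != 0, v (nrm d) = 0, mu != 0 & mul d (mul a (qconj d)) = qscal mu q'].
  move=> z cz' nz vz; exists (mul u z), (nrm (mul u z) * s^-1).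
  have nd : nrm (mul u z) != 0 by rewrite qnormM mulf_neq0.
  split => //.
  - by rewrite qnormM vM // vz; lia.
  - by rewrite mulf_neq0 ?invr_neq0.
  - have da : mul (mul u z) a = mul p (mul u z).
      by rewrite -qmulA cz' qmulA hc -qmulA.
    rewrite qmulA da -qmulA qmul_conj qmulkr qscalA mulrC -qscalA.
    by rewrite /p qscalA mulrC -qscalA.
have [hz ez] : exists hz, v (nrm z0) = 2 * hz + 1.
  have [hz [e|e]] := int_parity (v (nrm z0)); last by exists hz.
  by exfalso; apply: oz; exists hz.
have [h [eu|eu]] := int_parity (v (nrm u)).
- have [w [nw vw]] := val_exists (- h).
  apply: (fin (qk w)); first by rewrite qmulkl qmulkr.
    by rewrite qnormk expf_neq0.
  by rewrite qnormk vX // vw eu; lia.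
- have [w [nw vw]] := val_exists (- (h + hz + 1)).
  apply: (fin (qscal w z0)); first by rewrite qmulZl qmulZr cz.
    by rewrite qnormZ mulf_neq0 ?expf_neq0.
  by rewrite qnormZ vM ?expf_neq0 // vX // vw eu ez; lia.
Qed.

End Final.

Unset Implicit Arguments. Set Strict Implicit. Set Printing Implicit Defensive.

Theorem lemma4p2 (k : fieldType) (v : k -> int) (alpha beta : k)
    (O : quat k -> Prop) (a1 a2 : quat k) :
  dyadic_local_field v ->
  quat_division alpha beta ->
  maximal_order alpha beta v O ->
  pure a1 -> a1 <> qzero k -> pure a2 -> a2 <> qzero k ->
  (exists t : k, t != 0 /\ qnorm alpha beta a2 = qnorm alpha beta a1 * t ^+ 2) ->
  ramified alpha beta v a1 ->
  (exists (q : quat k) (eps : k), [/\ pure q, q <> qzero k, eps != 0 &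
     forall c, Hgroup alpha beta O a1 a2 c <-> Hgroup alpha beta O q (qscal eps q) c])
  /\
  (forall q' : quat k, pure q' -> q' <> qzero k ->
     (exists t : k, t != 0 /\ qnorm alpha beta q' = qnorm alpha beta a1 * t ^+ 2) ->
     exists eps : k, eps != 0 /\
       forall c, Hgroup alpha beta O a1 a2 c <-> Hgroup alpha beta O q' (qscal eps q') c).
Proof.
move=> dlf div mO pa1 na1 pa2 na2 [s [ns Es]] [x [y [nxy hodd]]].
case: dlf => vM [vA [[pi [pi0 vpi]] [_ [complete [ch v2]]]]].
have two0 := two_neq0 ch.
have Omul : forall x y, O x -> O y -> O (qmul alpha beta x y).
  by case: mO => -[_ [_ [_ [Om _]]]] _.
have U := unit_in_max vM vA complete two0 v2 pi0 vpi div mO.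
set z1 := qadd (qk x) (qscal y a1).
have nz1 : qnorm alpha beta z1 != 0.
  apply/eqP => h; have h0 := qnorm_eq0 h div.
  have ex : x = 0 by have := congr1 (@q0 k) h0; rewrite /z1 /= pa1 mulr0 addr0.
  move: h; rewrite /z1 nrm_lin // ex expr0n /= add0r => /eqP; rewrite mulf_eq0 => /orP [].
    rewrite expf_eq0 /= => ey; case: nxy => /eqP; by rewrite ?ex ?(eqP ey).
  by move/eqP/(qnorm_eq0) => /(_ div).
set z2 := qadd (qk x) (qscal (y / s) a2).
have ez2 : qnorm alpha beta z2 = qnorm alpha beta z1.
  rewrite /z2 /z1 !nrm_lin // Es; congr (_ + _); field; exact: ns.
have P2 : forall q' : quat k, pure q' -> q' <> qzero k ->
     (exists t : k, t != 0 /\ qnorm alpha beta q' = qnorm alpha beta a1 * t ^+ 2) ->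
     exists eps : k, eps != 0 /\
       forall c, Hgroup alpha beta O a1 a2 c <-> Hgroup alpha beta O q' (qscal eps q') c.
  move=> q' pq nq [t [nt Et]].
  have [d1 [mu1 [nd1 vd1 nmu1 E1]]] :=
    conj_to vM two0 v2 pi0 vpi div pa1 na1 (pure_comm alpha beta a1 x y) nz1 hodd pq nt Et.
  have Et2 : qnorm alpha beta q' = qnorm alpha beta a2 * (t / s) ^+ 2.
    rewrite Et Es; field; exact: ns.
  have nts : t / s != 0 by rewrite mulf_neq0 ?invr_neq0.
  have nz2 : qnorm alpha beta z2 != 0 by rewrite ez2.
  have hodd2 : ~ (exists m : int, v (qnorm alpha beta z2) = 2 * m) by rewrite ez2.
  have [d2 [mu2 [nd2 vd2 nmu2 E2]]] :=
    conj_to vM two0 v2 pi0 vpi div pa2 na2 (pure_comm alpha beta a2 x (y / s)) nz2 hodd2 pq nts Et2.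
  exists (mu2 / mu1); split; first by rewrite mulf_neq0 ?invr_neq0.
  have [O1 Oi1] := U _ nd1 vd1.
  have [O2 Oi2] := U _ nd2 vd2.
  apply: (Hgroup_equiv Omul nmu1 nd1 nd2 O1 O2 Oi1 Oi2).
  - by rewrite E1.
  - by rewrite qscalA mulrC mulfVK // E2.
split; last exact: P2.
have h1 : exists t : k, t != 0 /\ qnorm alpha beta a1 = qnorm alpha beta a1 * t ^+ 2.
  by exists 1; rewrite oner_neq0 expr1n mulr1.
have [eps [neps H]] := P2 a1 pa1 na1 h1.
by exists a1, eps; split.
Qed.
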